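(* Let $\alpha\in(0,1]$ and let $\mathcal{N}[\varphi]=\mathbb{E}[\varphi(\xi)]=\sup_{\mu\in\Theta}\mu[\varphi]$ be a sublinear expectation on $C_{b,Lip}(\mathbb{R})$ satisfying condition (H) below, with $\mathbb{E}[|\xi|^{1+\alpha}]<\infty$. Let $p_\xi(a)=\mathbb{E}[a\xi]$, $a\in\mathbb{R}$. Then for every $\phi\in C_b^{1,\alpha}(\mathbb{R})$ and every $\mu\in\Theta_\phi$, $$\big|E_\mu[\xi\phi'(\xi)-p_\xi(\phi'(\xi))]\big|\le 4[\phi']_\alpha\,\mathbb{E}[|\xi|^{1+\alpha}].$$
   Context: A sublinear expectation on $C_{b,Lip}(\mathbb{R})$ (bounded Lipschitz functions) is a monotone, positively homogeneous, constant-preserving, subadditive functional continuous from above along sequences decreasing to $0$; it is represented as $\mathcal{N}[\varphi]=\sup_{\mu\in\Theta}\mu[\varphi]$ for a weakly compact set $\Theta$ of Borel probability measures on $\mathbb{R}$, and is extended to other measurable functions by the same supremum. Notation: $\xi(x)=x$, $\mathbb{E}[\varphi(\xi)]=\mathcal{N}[\varphi]$, $E_\mu[\varphi(\xi)]=\int\varphi\,d\mu$, $\Theta_\phi=\{\mu\in\Theta:E_\mu[\phi(\xi)]=\mathbb{E}[\phi(\xi)]\}$. Condition (H): $\lim_{N\to\infty}\mathcal{N}[|x|1_{[|x|>N]}]=0$. $C_b^{1,\alpha}(\mathbb{R})$ is the set of bounded $C^1$ functions with bounded derivative whose derivative is $\alpha$-Hölder, and $[\phi']_\alpha=\sup_{x\ne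 y}|\phi'(x)-\phi'(y)|/|x-y|^\alpha$. *)

(* Defs.v *)
From HB Require Import structures.
From mathcomp Require Import all_boot all_order all_algebra.
From mathcomp Require Import all_classical all_reals all_analysis.
Set Implicit Arguments. Unset Strict Implicit. Unset Printing Implicit Defensive.
Import Order.TTheory GRing.Theory Num.Theory.
Import numFieldNormedType.Exports.
Local Open Scope classical_set_scope.
Local Open Scope ring_scope.

Section defs.
Context (R : realType).

Definition weak_cvg (u : nat -> probability R R) (mu : probability R R) : Prop :=
  forall f : R -> R, continuous f -> (exists M : R, forall x, `|f x| <= M) ->
    (fun n => (\int[u n]_x (f x)%:E)%E) @ \oo --> (\int[mu]_x (f x)%:E)%E.

(* Weak compactness (= sequential weak compactness, the weak topology on
   probability measures on R being metrizable). *)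
Definition weakly_compact (Theta : set (probability R R)) : Prop :=
  forall u : nat -> probability R R, (forall n, Theta (u n)) ->
    exists (s : nat -> nat) (mu : probability R R),
      {homo s : m n / (m < n)%N >-> (m < n)%N} /\ Theta mu /\ weak_cvg (u \o s) mu.

(* The sublinear expectation E[f(xi)] = sup_{mu in Theta} mu[f], xi(x) = x. *)
Definition sublin (Theta : set (probability R R)) (f : R -> R) : \bar R :=
  ereal_sup [set (\int[mu]_x (f x)%:E)%E | mu in Theta].

Definition condH (Theta : set (probability R R)) : Prop :=
  (fun N : R => sublin Theta (fun x => `|x| * (\1_[set y | N < `|y|] x : R)))
    @ +oo --> 0%E.

(* p_xi(a) = E[a xi] (finite under the moment assumption) *)
Definition p_xi (Theta : set (probability R R)) (a : R) : R :=
  fine (sublin Theta (fun x => a * x)).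

Definition Theta_of (Theta : set (probability R R)) (phi : R -> R) : set (probability R R) :=
  [set mu | Theta mu /\ (\int[mu]_x (phi x)%:E)%E = sublin Theta phi].

Definition Cb1alpha (alpha : R) (phi : R -> R) : Prop :=
  (exists M : R, forall x, `|phi x| <= M) /\
  (forall x, derivable phi x 1) /\
  continuous (derive1 phi) /\
  (exists M : R, forall x, `|(derive1 phi) x| <= M) /\
  (exists C : R, forall x y, `|(derive1 phi) x - (derive1 phi) y| <= C * `|x - y| `^ alpha).

Definition holder_semi (alpha : R) (g : R -> R) : \bar R :=
  ereal_sup [set r | exists x y : R, x != y /\ r = (`|g x - g y| / `|x - y| `^ alpha)%:E].
End defs.

(* Main.v *)
Require Import Defs.
From HB Require Import structures.
From mathcomp Require Import all_boot all_order all_algebra.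
From mathcomp Require Import all_classical all_reals all_analysis.
From mathcomp Require Import ring lra measurable_realfun.
Import Order.TTheory GRing.Theory Num.Theory.
Import numFieldNormedType.Exports.
Local Open Scope classical_set_scope.
Local Open Scope ring_scope.

Section S.
Context {R : realType}.
Lemma le_powR01 (u p : R) : 0 <= u <= 1 -> 0 < p <= 1 -> u <= u `^ p.
Proof.
move=> /andP[u0 u1] /andP[p0 p1].
have [->|un0] := eqVneq u 0; first by rewrite powR0 ?gt_eqF.
by apply: ger1_powR => //; rewrite lt_neqAle eq_sym un0 u0.
Qed.

Lemma powR_subadd (a b p : R) : 0 <= a -> 0 <= b -> 0 < p <= 1 ->
  (a + b) `^ p <= a `^ p + b `^ p.
Proof.
move=> a0 b0 hp; have /andP[p0 p1] := hp.
have [s0|s0] := eqVneq (a + b) 0.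
  have a00 : a = 0 by lra.
  have b00 : b = 0 by lra.
  by rewrite s0 a00 b00 powR0 ?gt_eqF // addr0.
have sp : 0 < a + b by rewrite lt_neqAle eq_sym s0 addr_ge0.
have ea : a `^ p = (a + b) `^ p * (a / (a + b)) `^ p.
  by rewrite -powRM ?(divr_ge0 a0 (ltW sp)) ?(ltW sp) // mulrC divfK.
have eb : b `^ p = (a + b) `^ p * (b / (a + b)) `^ p.
  by rewrite -powRM ?(divr_ge0 b0 (ltW sp)) ?(ltW sp) // mulrC divfK.
rewrite ea eb -mulrDr.
rewrite -[leLHS]mulr1 ler_pM2l ?powR_gt0 //.
apply: (@le_trans _ _ (a / (a + b) + b / (a + b))).
  by rewrite -mulrDl divff.
apply: lerD; apply: le_powR01 => //; rewrite divr_ge0 ?(ltW sp) //= ler_pdivrMr // mul1r; lra.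
Qed.

Lemma powR1p (x p : R) : 0 <= x -> 0 < p -> x `^ (1 + p) = x * x `^ p.
Proof.
move=> x0 p0; rewrite powRD ?powRr1 //.
by apply/implyP => /eqP h; exfalso; lra.
Qed.

Lemma powR_sum2 (a b p : R) : 0 <= a -> 0 <= b -> 0 < p <= 1 ->
  (a + b) `^ (1 + p) <= 2 * (a `^ (1 + p) + b `^ (1 + p)).
Proof.
move=> a0 b0 hp; have /andP[p0 p1] := hp.
rewrite !powR1p ?addr_ge0 //.
have h1 := @powR_subadd a b p a0 b0 hp.
have h2 : 0 <= (a - b) * (a `^ p - b `^ p).
  have [ab|ba] := leP a b.
    have : a `^ p <= b `^ p by apply: ge0_ler_powR => //; exact: ltW.
    move=> h; apply: mulr_le0 ; lra.
  have : b `^ p <= a `^ p by apply: ge0_ler_powR => //; [exact: ltW|exact: ltW].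
  move=> h; apply: mulr_ge0; lra.
have h3 : (a + b) * (a + b) `^ p <= (a + b) * (a `^ p + b `^ p).
  by rewrite ler_wpM2l // addr_ge0.
nra.
Qed.
End S.

Section S2.
Context {R : realType}.
Lemma mvt_phi (phi : R -> R) (a b : R) : (forall x, derivable phi x 1) -> a < b ->
  exists2 c, a < c < b & phi b - phi a = (derive1 phi) c * (b - a).
Proof.
move=> dphi ab.
have [c cab h] := @MVT R phi (derive1 phi) a b ab
  (fun z _ => (eq_ind_r (fun t => is_derive z 1 phi t) (derivableP (dphi z)) (derive1E phi z)))
  (derivable_within_continuous (fun z _ => dphi z)).
by exists c => //; move: cab; rewrite in_itv.
Qed.

Lemma taylor_phi (phi : R -> R) (L al : R) : (forall x, derivable phi x 1) ->
  0 <= L -> 0 < al ->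
  (forall x y, `|(derive1 phi) x - (derive1 phi) y| <= L * `|x - y| `^ al) ->
  forall x y, `|phi y - phi x - (derive1 phi) x * (y - x)| <= L * `|y - x| `^ (1 + al).
Proof.
move=> dphi L0 al0 hol x y.
rewrite powR1p // mulrCA.
have [xy|yx|<-] := ltgtP x y.
- have [c /andP[xc cy] ->] := @mvt_phi phi x y dphi xy.
  rewrite -mulrBl normrM mulrC ler_wpM2l //.
  apply: (le_trans (hol c x)); rewrite ler_wpM2l //.
  apply: ge0_ler_powR; [exact: ltW|by rewrite nnegrE|by rewrite nnegrE|].
  rewrite !ger0_norm; lra.
- have [c /andP[yc cx] e] := @mvt_phi phi y x dphi yx.
  have -> : phi y - phi x - (derive1 phi) x * (y - x) = ((derive1 phi) x - (derive1 phi) c) * (x - y).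
    have -> : phi y - phi x = - (phi x - phi y) by rewrite opprB.
    rewrite e; ring.
  rewrite normrM [`|y - x|]distrC mulrC ler_wpM2l //.
  apply: (le_trans (hol x c)); rewrite ler_wpM2l //.
  apply: ge0_ler_powR; [exact: ltW|by rewrite nnegrE|by rewrite nnegrE|].
  rewrite !ger0_norm; lra.
- by rewrite !subrr mulr0 subr0 normr0 mul0r.
Qed.
End S2.

Section Main.
Context {R : realType} (alpha : R) (ha : 0 < alpha <= 1).
Let pw (x : R) := `|x| `^ (1 + alpha).

Lemma pw_ge0 x : 0 <= pw x. Proof. exact: powR_ge0. Qed.

Lemma pw_meas : measurable_fun setT pw.
Proof. exact: (measurableT_comp (measurable_powR _) (@normr_measurable R setT)). Qed.

Lemma abs_le_pw x : `|x| <= 1 + pw x.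
Proof.
have := pw_ge0 x.
have [x1|x1] := leP `|x| 1; first lra.
have : `|x| <= pw x.
  apply: le1r_powR; first exact: ltW.
  by case/andP: ha => a0 _; lra.
lra.
Qed.

Lemma int_dom (nu : probability R R) (f : R -> R) (A B : R) :
  nu.-integrable setT (EFin \o pw) -> measurable_fun setT f -> 0 <= A -> 0 <= B ->
  (forall x, `|f x| <= A + B * pw x) -> nu.-integrable setT (EFin \o f).
Proof.
move=> ipw mf A0 B0 hf.
have ig : nu.-integrable setT (fun x => (A%:E + B%:E * (EFin \o pw) x)%E).
  apply: (integrableD measurableT); last exact: integrableZl.
  exact: (finite_measure_integrable_cst nu A measurableT).
apply: (le_integrable measurableT _ _ ig).
  exact/measurable_EFinP.
move=> x _ /=; rewrite lee_fin.
apply: (le_trans (hf x)); exact: ler_norm.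
Qed.

Lemma Rint_cstD (nu : probability R R) (f : R -> R) (K : R) :
  nu.-integrable setT (EFin \o f) ->
  \int[nu]_x (f x + K) = \int[nu]_x f x + K.
Proof.
move=> fi; rewrite RintegralD //; last exact: finite_measure_integrable_cst.
rewrite Rintegral_cst //; set m := fine _.
have -> : m = 1.
  exact: (congr1 fine (probability_setT nu)).
by rewrite mulr1.
Qed.

Variable Theta : set (probability R R).
Hypothesis Tne : Theta !=set0.
Let E := sublin Theta pw.
Hypothesis Efin : (E < +oo)%E.

Lemma le_E {nu} : Theta nu -> (\int[nu]_x (pw x)%:E <= E)%E.
Proof. by move=> Tn; apply: ereal_sup_ubound; exists nu. Qed.

Lemma int_pw {nu} : Theta nu -> nu.-integrable setT (EFin \o pw).
Proof.
move=> Tn; apply/integrableP; split; first by apply/measurable_EFinP; exact: pw_meas.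
rewrite (eq_integral (fun x => (pw x)%:E)); last first.
  by move=> x _; rewrite /= ger0_norm // pw_ge0.
apply: (le_lt_trans _ Efin); exact: le_E.
Qed.

Lemma E_fin : E \is a fin_num.
Proof.
case: Tne => nu Tn; rewrite fin_numE; apply/andP; split.
  rewrite gt_eqF // (@lt_le_trans _ _ 0%E) ?ltNye //.
  have h := le_E Tn.
  have h0 : (0 <= \int[nu]_x (pw x)%:E)%E.
    by apply: integral_ge0 => x _; rewrite lee_fin pw_ge0.
  exact: le_trans h0 h.
by rewrite lt_eqF.
Qed.

Let Er := fine E.

Lemma Rint_pw_le {nu} : Theta nu -> \int[nu]_x pw x <= Er.
Proof.
move=> Tn; rewrite /Rintegral /Er fine_le //; last exact: le_E.
  exact: integrable_fin_num (int_pw Tn).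
exact: E_fin.
Qed.

Lemma Rint_pw_ge0 nu : 0 <= \int[nu]_x pw x.
Proof. by apply: Rintegral_ge0 => x _; exact: pw_ge0. Qed.

Lemma Er_ge0 : 0 <= Er.
Proof. by case: Tne => nu Tn; exact: le_trans (Rint_pw_ge0 nu) (Rint_pw_le Tn). Qed.

Lemma int_id {nu} : Theta nu -> nu.-integrable setT (EFin \o (fun y : R => y)).
Proof.
move=> Tn; apply: (@int_dom _ _ 1 1 (int_pw Tn)) => //.
by move=> x; rewrite mul1r abs_le_pw.
Qed.

Definition mean (nu : probability R R) := \int[nu]_x x.

Lemma mean_bound nu : Theta nu -> `|mean nu| <= 1 + Er.
Proof.
move=> Tn; apply: (le_trans (le_normr_Rintegral measurableT (int_id Tn))).
apply: (@le_trans _ _ (\int[nu]_x (pw x + 1))).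
  apply: le_Rintegral => //.
  - exact/integrable_norm/(int_id Tn).
  - apply: (@int_dom _ _ 1 1 (int_pw Tn)) => //.
      by apply: measurable_funD => //; exact: pw_meas.
    by move=> x; rewrite mul1r ger0_norm ?addr_ge0 ?pw_ge0 // addrC.
  by move=> x _; rewrite addrC abs_le_pw.
rewrite Rint_cstD; last exact: int_pw.
by have := Rint_pw_le Tn; lra.
Qed.

Lemma Rint_lin nu a : Theta nu -> \int[nu]_x (a * x) = a * mean nu.
Proof. by move=> Tn; rewrite RintegralZl //; exact: int_id. Qed.

Lemma int_lin nu a : Theta nu -> (\int[nu]_x (a * x)%:E)%E = (a * mean nu)%:E.
Proof.
move=> Tn; rewrite -Rint_lin // /Rintegral fineK //.
have ia : nu.-integrable setT (EFin \o (fun x => a * x)); last exact: integrable_fin_num ia.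
apply: (@int_dom _ _ `|a| `|a| (int_pw Tn)) => //.
  exact: mulrl_measurable.
move=> x; rewrite normrM -[X in X + _]mulr1 -mulrDr ler_wpM2l //; exact: abs_le_pw.
Qed.


Lemma intD (nu : probability R R) (f g : R -> R) : nu.-integrable setT (EFin \o f) ->
  nu.-integrable setT (EFin \o g) -> nu.-integrable setT (EFin \o (fun y => f y + g y)).
Proof.
move=> hf hg; apply: (eq_integrable measurableT _ _ _ (integrableD measurableT hf hg)).
by move=> x _.
Qed.

Lemma intZ (nu : probability R R) (k : R) (f : R -> R) : nu.-integrable setT (EFin \o f) ->
  nu.-integrable setT (EFin \o (fun y => k * f y)).
Proof.
move=> hf; apply: (eq_integrable measurableT _ _ _ (integrableZl measurableT k hf)).
by move=> x _.
Qed.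

Variable phi : R -> R.
Hypothesis dphi : forall x, derivable phi x 1.
Variable L : R.
Hypothesis L0 : 0 <= L.
Hypothesis hol : forall x y, `|derive1 phi x - derive1 phi y| <= L * `|x - y| `^ alpha.
Hypothesis dcont : continuous (derive1 phi).
Variable M : R.
Hypothesis phiM : forall x, `|phi x| <= M.
Variable mu : probability R R.
Hypothesis hmu : Theta_of Theta phi mu.

Lemma taylor2 x y :
  `|phi y - phi x - derive1 phi x * (y - x)| <= 2 * L * (pw x + pw y).
Proof.
have a0 : 0 < alpha by case/andP: ha.
apply: (le_trans (@taylor_phi R phi L alpha dphi L0 a0 hol x y)).
rewrite -mulrA (mulrC 2) -mulrA ler_wpM2l //.
apply: (@le_trans _ _ ((`|y| + `|x|) `^ (1 + alpha))).
  apply: ge0_ler_powR; rewrite ?nnegrE ?addr_ge0 //; first lra.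
  exact: ler_normB.
rewrite addrC mulrC; exact: (@powR_sum2 R `|x| `|y| alpha (normr_ge0 _) (normr_ge0 _) ha).
Qed.

Lemma phi_meas : measurable_fun setT phi.
Proof.
apply: continuous_measurable_fun => x.
exact: differentiable_continuous ((derivable1_diffP phi x).1 (dphi x)).
Qed.

Lemma M0 : 0 <= M.
Proof. exact: le_trans (normr_ge0 _) (phiM 0). Qed.

Lemma int_phi {nu} : Theta nu -> nu.-integrable setT (EFin \o phi).
Proof.
move=> Tn; apply: (@int_dom _ _ M 0 (int_pw Tn)) => //.
- exact: phi_meas.
- exact: M0.
- by move=> x; rewrite mul0r addr0.
Qed.

Lemma int_cst (nu : probability R R) (K : R) : nu.-integrable setT (EFin \o (fun _ : R => K)).
Proof. exact: finite_measure_integrable_cst. Qed.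

Lemma int_comb {nu} b1 b2 b3 : Theta nu ->
  nu.-integrable setT (EFin \o (fun y => b1 * y + b2 * phi y + b3 * pw y)).
Proof.
move=> Tn; apply: intD; first apply: intD.
- exact: intZ (int_id Tn).
- exact: intZ (int_phi Tn).
- exact: intZ (int_pw Tn).
Qed.

Lemma Rint_comb (nu : probability R R) b1 b2 b3 K : Theta nu ->
  \int[nu]_y (b1 * y + b2 * phi y + b3 * pw y + K) =
  b1 * mean nu + b2 * \int[nu]_y phi y + b3 * \int[nu]_y pw y + K.
Proof.
move=> Tn; rewrite Rint_cstD; last exact: int_comb.
rewrite RintegralD //; last exact: intZ (int_pw Tn).
  rewrite RintegralD //; last exact: intZ (int_phi Tn).
    by rewrite (RintegralZl _ measurableT (int_pw Tn)) (RintegralZl _ measurableT (int_phi Tn)) (RintegralZl _ measurableT (int_id Tn)).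
  exact: intZ (int_id Tn).
apply: intD; [exact: intZ (int_id Tn)|exact: intZ (int_phi Tn)].
Qed.

Lemma comb_le (nu : probability R R) b1 b2 b3 K c1 c2 c3 K' : Theta nu ->
  (forall y, b1 * y + b2 * phi y + b3 * pw y + K <= c1 * y + c2 * phi y + c3 * pw y + K') ->
  b1 * mean nu + b2 * \int[nu]_y phi y + b3 * \int[nu]_y pw y + K <=
  c1 * mean nu + c2 * \int[nu]_y phi y + c3 * \int[nu]_y pw y + K'.
Proof.
move=> Tn h; rewrite -!Rint_comb //; apply: le_Rintegral => //;
  try (by move=> y _; exact: h); by apply: intD; [exact: int_comb|exact: int_cst].
Qed.

Let c := \int[mu]_x phi x.

Lemma Tmu : Theta mu. Proof. by case: hmu. Qed.

Lemma Rint_phi_le {nu} : Theta nu -> \int[nu]_x phi x <= c.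
Proof.
move=> Tn; rewrite /c /Rintegral; apply: fine_le.
- exact: integrable_fin_num (int_phi Tn).
- exact: integrable_fin_num (int_phi Tmu).
case: hmu => _ ->; apply: ereal_sup_ubound; by exists nu.
Qed.

Lemma upper nu x : Theta nu ->
  derive1 phi x * mean nu <= derive1 phi x * x + c - phi x + 2 * L * (pw x + Er).
Proof.
move=> Tn; set a := derive1 phi x.
have h := @comb_le nu a 0 0 0 0 1 (2 * L) (a * x - phi x + 2 * L * pw x) Tn.
have /h : forall y, a * y + 0 * phi y + 0 * pw y + 0 <=
    0 * y + 1 * phi y + 2 * L * pw y + (a * x - phi x + 2 * L * pw x).
  move=> y; have := taylor2 x y; rewrite -/a ler_norml => /andP[t1 t2].
  lra.
have := Rint_phi_le Tn.
have := ler_wpM2l (mulr_ge0 (ler0n _ 2) L0) (Rint_pw_le Tn).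
lra.
Qed.

Lemma lower x :
  derive1 phi x * x - derive1 phi x * mean mu <= phi x - c + 2 * L * (pw x + Er).
Proof.
set a := derive1 phi x.
have h := @comb_le mu 0 1 (- (2 * L)) (a * x - phi x - 2 * L * pw x) a 0 0 0 Tmu.
have /h : forall y, 0 * y + 1 * phi y + - (2 * L) * pw y + (a * x - phi x - 2 * L * pw x) <=
    a * y + 0 * phi y + 0 * pw y + 0.
  move=> y; have := taylor2 x y; rewrite -/a ler_norml => /andP[t1 t2].
  lra.
have := ler_wpM2l (mulr_ge0 (ler0n _ 2) L0) (Rint_pw_le Tmu).
rewrite -/c; lra.
Qed.

Let p := p_xi Theta.
Let S a := sublin Theta (fun x => a * x).

Lemma S_le a r : (forall nu, Theta nu -> a * mean nu <= r) -> (S a <= r%:E)%E.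
Proof. by move=> h; apply: ge_ereal_sup => _ [nu Tn <-]; rewrite int_lin // lee_fin; exact: h. Qed.

Lemma S_ge {nu} a : Theta nu -> ((a * mean nu)%:E <= S a)%E.
Proof. by move=> Tn; rewrite -int_lin //; apply: ereal_sup_ubound; exists nu. Qed.

Lemma S_fin a : S a \is a fin_num.
Proof.
rewrite fin_numE; apply/andP; split.
  by rewrite gt_eqF // (lt_le_trans (ltNyr _) (S_ge a Tmu)).
rewrite lt_eqF // (@le_lt_trans _ _ (`|a| * (1 + Er))%:E) ?ltey //.
apply: S_le => nu Tn; apply: (le_trans (ler_norm _)).
by rewrite normrM ler_wpM2l // mean_bound.
Qed.

Lemma p_ge {nu} a : Theta nu -> a * mean nu <= p a.
Proof. by move=> Tn; rewrite -lee_fin /p /p_xi fineK ?S_fin //; exact: S_ge. Qed.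

Lemma p_le a r : (forall nu, Theta nu -> a * mean nu <= r) -> p a <= r.
Proof. by move=> h; rewrite -lee_fin /p /p_xi fineK ?S_fin //; exact: S_le. Qed.

Lemma p_lip a b : p a <= p b + `|a - b| * (1 + Er).
Proof.
apply: p_le => nu Tn; have := p_ge b Tn.
have : (a - b) * mean nu <= `|a - b| * (1 + Er).
  by apply: (le_trans (ler_norm _)); rewrite normrM ler_wpM2l // mean_bound.
lra.
Qed.

Lemma p_cont : continuous p.
Proof.
have K0 : 0 < 1 + Er by have := Er_ge0; lra.
move=> x; apply/cvgrPdist_le => e e0; apply/nbhs_normP; exists (e / (1 + Er)).
  by rewrite /= divr_gt0.
move=> y /= hy.
have h1 := p_lip x y; have h2 := p_lip y x; rewrite distrC in h2.
have : `|x - y| * (1 + Er) <= e by rewrite -ler_pdivlMr // ltW.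
rewrite ler_norml; move=> h3; apply/andP; split; lra.
Qed.

Lemma g_bound x :
  `|(x * derive1 phi x - p (derive1 phi x)) - (phi x - c)| <= 2 * L * (pw x + Er).
Proof.
have h1 := lower x; have h2 := p_ge (derive1 phi x) Tmu.
have h3 : p (derive1 phi x) <= derive1 phi x * x + c - phi x + 2 * L * (pw x + Er).
  by apply: p_le => nu Tn; exact: upper.
rewrite ler_norml; apply/andP; split; rewrite [x * _]mulrC; lra.
Qed.

Lemma intB (nu : probability R R) (f g : R -> R) : nu.-integrable setT (EFin \o f) ->
  nu.-integrable setT (EFin \o g) -> nu.-integrable setT (EFin \o (fun y => f y - g y)).
Proof.
move=> hf hg; apply: (eq_integrable measurableT _ _ _ (integrableB measurableT hf hg)).
by move=> x _.
Qed.

Lemma main_real :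
  (`| \int[mu]_x ((x * derive1 phi x - p_xi Theta (derive1 phi x))%:E) | <= (4 * L * Er)%:E)%E.
Proof.
set g := fun x => x * derive1 phi x - p (derive1 phi x).
have pc : continuous (fun x => p (derive1 phi x)).
  by move=> x; exact: continuous_comp (dcont x) (p_cont _).
have gm : measurable_fun setT g.
  apply: measurable_funB; last exact: continuous_measurable_fun.
  by apply: measurable_funM => //; exact: continuous_measurable_fun.
have ig : mu.-integrable setT (EFin \o g).
  apply: (@int_dom _ g (M + `|c| + 2 * L * Er) (2 * L) (int_pw Tmu)) => //.
  - have := M0; have := Er_ge0; have := normr_ge0 c.
    have := mulr_ge0 (mulr_ge0 (ler0n _ 2) L0) Er_ge0; lra.
  - by apply: mulr_ge0.
  move=> x; have := g_bound x; have := phiM x.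
  have t1 : `|g x| <= `|g x - (phi x - c)| + `|phi x - c|.
    by rewrite -{1}(subrK (phi x - c) (g x)); exact: ler_normD.
  have t2 := ler_normB (phi x) c.
  rewrite /g in t1 *; lra.
have ih : mu.-integrable setT (EFin \o (fun x => phi x - c)).
  by apply: intB; [exact: int_phi Tmu|exact: int_cst].
have -> : (\int[mu]_x ((x * derive1 phi x - p_xi Theta (derive1 phi x))%:E))%E = (\int[mu]_x g x)%:E.
  by rewrite /Rintegral fineK //; exact: integrable_fin_num ig.
rewrite abse_EFin lee_fin.
have e0 : \int[mu]_x (phi x - c) = 0.
  by rewrite Rint_cstD ?subrr //; exact: int_phi Tmu.
have -> : \int[mu]_x g x = \int[mu]_x (g x - (phi x - c)).
  by rewrite [RHS]RintegralB // e0 subr0.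
have igh := @intB mu _ _ ig ih.
apply: (le_trans (le_normr_Rintegral measurableT igh)).
apply: (@le_trans _ _ (\int[mu]_x (2 * L * pw x + 2 * L * Er))).
  apply: le_Rintegral => //.
  - exact: integrable_norm igh.
  - by apply: intD; [exact: intZ (int_pw Tmu)|exact: int_cst].
  by move=> x _; rewrite -mulrDr; exact: g_bound.
rewrite Rint_cstD; last exact: intZ (int_pw Tmu).
rewrite RintegralZl //; last exact: int_pw Tmu.
have := ler_wpM2l (mulr_ge0 (ler0n _ 2) L0) (Rint_pw_le Tmu).
lra.
Qed.

End Main.

Lemma holder_fin {R : realType} (alpha : R) (g : R -> R) (C : R) : 0 < alpha ->
  (forall x y, `|g x - g y| <= C * `|x - y| `^ alpha) ->
  [/\ holder_semi alpha g \is a fin_num, 0 <= fine (holder_semi alpha g) &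
    forall x y, `|g x - g y| <= fine (holder_semi alpha g) * `|x - y| `^ alpha].
Proof.
move=> a0 hC.
have hle : (holder_semi alpha g <= C%:E)%E.
  apply: ge_ereal_sup => _ [x [y [xy ->]]].
  rewrite lee_fin ler_pdivrMr; first exact: hC.
  by rewrite powR_gt0 // normr_gt0 subr_eq0.
have hge : (0 <= holder_semi alpha g)%E.
  apply: (@le_trans _ _ (`|g 0 - g 1| / `|0 - 1| `^ alpha)%:E).
    by rewrite lee_fin divr_ge0 // powR_ge0.
  apply: ereal_sup_ubound; exists 0, 1; split => //.
  by rewrite eq_sym oner_neq0.
have hfin : holder_semi alpha g \is a fin_num.
  rewrite fin_numE; apply/andP; split.
    by rewrite gt_eqF // (lt_le_trans (ltNyr 0) hge).
  by rewrite lt_eqF // (le_lt_trans hle (ltry _)).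
split => //; first by rewrite fine_ge0.
move=> x y; have [->|xy] := eqVneq x y.
  by rewrite subrr normr0 mulr_ge0 ?powR_ge0 ?fine_ge0.
rewrite -ler_pdivrMr; last by rewrite powR_gt0 // normr_gt0 subr_eq0.
rewrite -lee_fin fineK //; apply: ereal_sup_ubound; by exists x, y.
Qed.

Theorem lemma3p2 (R : realType) (alpha : R) (Theta : set (probability R R)) :
  0 < alpha <= 1 ->
  Theta !=set0 ->
  weakly_compact Theta ->
  condH Theta ->
  (sublin Theta (fun x => (`|x| `^ (1 + alpha))%R) < +oo)%E ->
  forall phi : R -> R, Cb1alpha alpha phi ->
  forall mu : probability R R, Theta_of Theta phi mu ->
  (`| \int[mu]_x ((x * (derive1 phi) x - p_xi Theta ((derive1 phi) x))%R)%:E |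
     <= (4%:R)%:E * holder_semi alpha (derive1 phi) * sublin Theta (fun x => (`|x| `^ (1 + alpha))%R))%E.
Proof.
move=> ha Tne _ _ Efin phi [[M phiM] [dphi [dcont [_ [C hC]]]]] mu hmu.
have a0 : 0 < alpha by case/andP: ha.
have [hsfin L0 hol] := @holder_fin R alpha (derive1 phi) C a0 hC.
have h := @main_real R alpha ha Theta Tne Efin phi dphi _ L0 hol dcont M phiM mu hmu.
rewrite -(fineK hsfin) -(fineK (@E_fin R alpha Theta Tne Efin)) -!EFinM.
exact: h.
Qed.
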